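(* Let $t,d \ge 1$ and let $m$ be an integer with $1 \le m \le n/d$. Let $\mathcal{G}'_{t,d}$ be the class of partially colored graphs obtained by taking a graph $G \in \mathcal{G}_{t,d}$, choosing a set of $dm$ of its $n$ vertices, and coloring these $dm$ vertices bijectively with the colors $\{1,\ldots,dm\}$ (the remaining vertices uncolored), with graphs considered up to color-preserving isomorphism. Then $$\log |\mathcal{G}'_{t,d}| \le \log |\mathcal{G}_{t,d}| + n \log n - (n-md)\log(n-md) - dm + O(\log n).$$
   Context: All logarithms are base 2. A graph $G$ on $n$ vertices has a $d$-dimensional $t$-representation if each vertex can be assigned a set of at most $t$ pairwise disjoint $d$-dimensional axis-parallel boxes (products of $d$ closed real intervals) such that distinct vertices are adjacent iff some box of one intersects some box of the other. $\mathcal{G}_{t,d}$ is the class of unlabeled $n$-vertex graphs having such a representation. *)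

(* Defs.v *)
From mathcomp Require Import all_boot all_fingroup.
From Stdlib Require Import Reals ClassicalDescription.
Set Implicit Arguments. Unset Strict Implicit. Unset Printing Implicit Defensive.

Definition pb (P : Prop) : bool :=
  if excluded_middle_informative P then true else false.

(* base-2 logarithm on reals (Stdlib ln is 0 on nonpositive arguments,
   so 0 * log2 0 = 0) *)
Definition log2 (x : R) : R := (ln x / ln 2)%R.

Definition graph n := {set 'I_n * 'I_n}.
Definition adj n (g : graph n) (u v : 'I_n) : bool := (u, v) \in g.
Definition is_graph n (g : graph n) : Prop :=
  forall u v, adj g u v = adj g v u /\ adj g u u = false.

(* a box is prod_i [lo i, hi i], with lo i <= hi i *)
Definition box d := (('I_d -> R) * ('I_d -> R))%type.
Definition box_ok d (b : box d) : Prop := forall i, (b.1 i <= b.2 i)%R.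
(* two products of closed intervals intersect iff they overlap in every coordinate *)
Definition box_meet d (b1 b2 : box d) : Prop :=
  forall i, (b1.1 i <= b2.2 i)%R /\ (b2.1 i <= b1.2 i)%R.

Definition has_rep (t d : nat) n (g : graph n) : Prop :=
  exists rep : 'I_n -> list (box d),
    (forall v, size (rep v) <= t) /\
    (forall v b, List.In b (rep v) -> box_ok b) /\
    (forall v i j, i < size (rep v) -> j < size (rep v) -> i <> j ->
        ~ box_meet (List.nth i (rep v) (fun _ => 0%R, fun _ => 0%R))
                   (List.nth j (rep v) (fun _ => 0%R, fun _ => 0%R))) /\
    (forall u v, u <> v ->
        (adj g u v <-> exists b1 b2, List.In b1 (rep u) /\ List.In b2 (rep v)
                                     /\ box_meet b1 b2)).

Definition num_classes (T : finType) (S : {set T}) (r : T -> T -> Prop) : nat :=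
  #|[set [set y in S | pb (r x y)] | x in S]|.

Definition graph_iso n (g h : graph n) : Prop :=
  exists s : {perm 'I_n}, forall u v, adj g u v = adj h (s u) (s v).

Definition Gtd_labeled (t d n : nat) : {set graph n} :=
  [set g | pb (is_graph g /\ has_rep t d g)].

Definition card_Gtd (t d n : nat) : nat := num_classes (Gtd_labeled t d n) (@graph_iso n).

(* a coloring assigns to each vertex either no color or a color in 'I_k
   (colors {1..k} represented as 'I_k); a valid one is a bijection from the
   colored vertices onto all k colors *)
Definition pcgraph n k := (graph n * {ffun 'I_n -> option 'I_k})%type.
Definition valid_coloring n k (c : {ffun 'I_n -> option 'I_k}) : Prop :=
  (forall u v (a : 'I_k), c u = Some a -> c v = Some a -> u = v) /\
  (forall a : 'I_k, exists v, c v = Some a).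

Definition Gtd'_labeled (t d n m : nat) : {set pcgraph n (d * m)} :=
  [set gc | pb (is_graph gc.1 /\ has_rep t d gc.1 /\ valid_coloring gc.2)].

Definition pc_iso n k (x y : pcgraph n k) : Prop :=
  exists s : {perm 'I_n},
    (forall u v, adj x.1 u v = adj y.1 (s u) (s v)) /\
    (forall v, x.2 v = y.2 (s v)).

Definition card_Gtd' (t d n m : nat) : nat :=
  num_classes (Gtd'_labeled t d n m) (@pc_iso n (d * m)).

(* Main.v *)
Require Import Defs.
From mathcomp Require Import all_boot all_fingroup.
From Stdlib Require Import Reals Lra ClassicalDescription.

Lemma pbP (P : Prop) : reflect P (pb P).
Proof. rewrite /pb; case: excluded_middle_informative => H; by constructor. Qed.

Lemma pb_eq (P Q : Prop) : (P <-> Q) -> pb P = pb Q.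
Proof. move=> [H1 H2]; apply/idP/idP => /pbP H; apply/pbP; auto. Qed.

Lemma pc_iso_sym n k (x y : pcgraph n k) : pc_iso x y -> pc_iso y x.
Proof.
move=> [s [H1 H2]]; exists s^-1%g; split => [u v|v].
  by rewrite H1 !permKV.
by rewrite H2 permKV.
Qed.

Lemma pc_iso_trans n k (x y z : pcgraph n k) : pc_iso x y -> pc_iso y z -> pc_iso x z.
Proof.
move=> [s [H1 H2]] [r [K1 K2]]; exists (s * r)%g; split => [u v|v].
  by rewrite H1 K1 !permM.
by rewrite H2 K2 permM.
Qed.

Lemma count_colorings n k :
  #|[set c : {ffun 'I_n -> option 'I_k} | pb (valid_coloring c)]| <= n ^_ k.
Proof.
set I := [set f : {ffun 'I_k -> 'I_n} | injectiveb f].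
pose cf (f : {ffun 'I_k -> 'I_n}) : {ffun 'I_n -> option 'I_k} :=
  [ffun v => [pick a | f a == v]].
apply: (@leq_trans #|[set cf f | f in I]|); last first.
  apply: leq_trans (leq_imset_card _ _) _.
  by rewrite card_inj_ffuns !card_ord.
apply: subset_leq_card; apply/subsetP => c; rewrite inE => /pbP [Hu He].
have [g Hg] := fin_all_exists He.
apply/imsetP; exists (finfun g).
  rewrite inE; apply/injectiveP => a b; rewrite !ffunE => e.
  by have := Hg a; rewrite e Hg; case.
apply/ffunP => v; rewrite ffunE; case: pickP => [a /eqP <-| H].
  by rewrite ffunE Hg.
case E: (c v) => [a|] //.
have := H a; rewrite ffunE.
by rewrite (Hu _ _ _ (Hg a) E) eqxx.
Qed.

Lemma comb t d n m : card_Gtd' t d n m <= card_Gtd t d n * n ^_ (d * m).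
Proof.
rewrite /card_Gtd' /card_Gtd /num_classes.
set S' := Gtd'_labeled t d n m.
set S := Gtd_labeled t d n.
set V := [set c : {ffun 'I_n -> option 'I_(d * m)} | pb (valid_coloring c)].
set Q := [set [set y in S | pb (graph_iso x y)] | x in S].
pose G (p : {set graph n} * {ffun 'I_n -> option 'I_(d * m)}) :=
  [set y in S' | pb (pc_iso (odflt set0 [pick g in p.1], p.2) y)].
apply: (@leq_trans #|[set G p | p in setX Q V]|); last first.
  apply: leq_trans (leq_imset_card _ _) _.
  by rewrite cardsX leq_mul2l count_colorings orbT.
apply: subset_leq_card; apply/subsetP => C /imsetP [x xS ->].
move: (xS); rewrite inE => /pbP [Hg [Hr [Hu He]]].
set X := [set y in S | pb (graph_iso x.1 y)].
have x1X : x.1 \in X.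
  rewrite inE; apply/andP; split.
    by rewrite inE; apply/pbP.
  by apply/pbP; exists 1%g => u v; rewrite !perm1.
have XQ : X \in Q by apply/imsetP; exists x.1 => //; rewrite inE; apply/pbP.
have g0X : odflt set0 [pick g in X] \in X.
  by case: pickP => [g ->|/(_ x.1)]; rewrite ?x1X.
set g0 := odflt set0 [pick g in X] in g0X.
move: (g0X); rewrite inE => /andP [g0S /pbP [s Hs]].
set c' := [ffun v => x.2 (s^-1%g v)].
have H0 : pc_iso x (g0, c').
  exists s; split => [u v|v] //=.
  by rewrite ffunE permK.
apply/imsetP; exists (X, c').
  rewrite inE /=; apply/andP; split => //.
  rewrite inE; apply/pbP; split.
    move=> u v a; rewrite !ffunE => E1 E2.
    by apply: (@perm_inj _ s^-1%g); apply: (Hu _ _ a).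
  move=> a; have [v Hv] := He a; exists (s v); by rewrite ffunE permK.
rewrite /G /= -/g0; apply/setP => y; rewrite !inE; congr (_ && _).
apply: pb_eq; split => H.
  eapply pc_iso_trans; [apply: pc_iso_sym; exact H0| exact H].
eapply pc_iso_trans; [exact H0| exact H].
Qed.
Section RealPart.
Local Open Scope R_scope.

Lemma ln0 : ln 0 = 0.
Proof. unfold ln. destruct (Rlt_dec 0 0) as [h|h].
- exfalso; exact (Rlt_irrefl 0 h). - reflexivity. Qed.

Lemma lnle x y : 0 < x -> x <= y -> ln x <= ln y.
Proof. move=> Hx [H|->]; [left; apply: ln_increasing => //|right=>//]. Qed.

Lemma ln_le_sub1 z : 0 < z -> ln z <= z - 1.
Proof. move=> Hz. have := exp_ineq1_le (ln z). rewrite exp_ln //. lra. Qed.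

Lemma ln_nat_ge0 (n : nat) : 0 <= ln (INR n).
Proof.
case: n => [|n]; first by rewrite /= ln0; lra.
rewrite -ln_1; apply: lnle; first lra. rewrite S_INR; have := pos_INR n; lra.
Qed.

Lemma key_ineq (n : nat) : (1 <= n)%nat -> 1 <= (INR n + 1) * ln (INR n + 1) - (INR n + 1) * ln (INR n).
Proof.
move=> Hn. have Hx : 1 <= INR n by apply: (le_INR 1); apply/leP.
have H := ln_le_sub1 (INR n / (INR n + 1)) ltac:(apply: Rdiv_lt_0_compat; lra).
rewrite /Rdiv ln_mult in H; try (apply: Rinv_0_lt_compat; lra); try lra.
rewrite ln_Rinv in H; last lra.
have E : INR n * / (INR n + 1) - 1 = - / (INR n + 1) by field; lra.
rewrite E in H.
have H2 : (INR n + 1) * (ln (INR n) + - ln (INR n + 1)) <= (INR n + 1) * (- / (INR n + 1)).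
  apply: Rmult_le_compat_l; lra.
have E2 : (INR n + 1) * (- / (INR n + 1)) = -1 by field; lra.
lra.
Qed.

Definition fl (x : R) := x * ln x - x.

Lemma ffact_bound (a k : nat) :
  ln (INR ((a + k) ^_ k)) <= fl (INR (a + k)) - fl (INR a) + ln (INR (a + k)) + 1.
Proof.
elim: k => [|k IH].
  rewrite addn0 ffactn0 /= ln_1. have := ln_nat_ge0 a. lra.
rewrite addnS ffactnS /=.
case E: (a + k)%nat => [|n].
  clear IH; move: E; case: a => [|a]; case: k => [|k] //= _.
  rewrite /fl /= ln_1 ln0; lra.
rewrite E in IH.
have Hp : (0 < (n.+1) ^_ k)%nat.
  rewrite ffact_gt0 -E; by apply: leq_addl.
rewrite mult_INR ln_mult; first last.
  by apply: (lt_INR 0); apply/ltP.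
  by apply: (lt_INR 0); apply/ltP.
have K := key_ineq (n.+1) is_true_true.
move: IH K; rewrite /fl !S_INR. lra.
Qed.
End RealPart.

Lemma ln2_lt1 : (ln 2 < 1)%R.
Proof.
have H := exp_ineq1 1 R1_neq_R0.
rewrite -[X in (_ < X)%R](ln_exp 1). apply: ln_increasing; lra.
Qed.

Theorem proposition1 (t d : nat) (Ht : 1 <= t) (Hd : 1 <= d) :
  exists (C : R) (N : nat), forall n m : nat,
    N <= n -> 1 <= m -> d * m <= n ->
    (log2 (INR (card_Gtd' t d n m))
     <= log2 (INR (card_Gtd t d n))
        + INR n * log2 (INR n)
        - INR (n - d * m) * log2 (INR (n - d * m))
        - INR (d * m)
        + C * log2 (INR n))%R.
Proof.
exists 3%R, 2 => n m Hn Hm Hk.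
have Hc := comb t d n m.
move: Hc Hk.
set k := d * m. set A' := card_Gtd' t d n m. set A := card_Gtd t d n.
move=> Hc Hk.
set a := n - k.
have En : n = (a + k)%nat by rewrite subnK.
have HP : 0 < n ^_ k by rewrite ffact_gt0.
have Hb := ffact_bound a k. rewrite -En in Hb.
set P := n ^_ k in HP Hc Hb.
have HL1 := ln2_lt1. have HL2 := ln_lt_2.
have Hw : (ln 2 <= ln (INR n))%R.
  apply: lnle; first lra. by apply: (le_INR 2); apply/leP.
have Hs : (ln (INR A') <= ln (INR A) + ln (INR P))%R.
  case E: A' => [|a'].
    rewrite /= ln0; have := ln_nat_ge0 A; have := ln_nat_ge0 P; lra.
  have HA : 0 < A.
    rewrite lt0n; apply/eqP => E2; move: Hc; by rewrite E E2.
  rewrite -ln_mult; try (apply: (lt_INR 0); apply/ltP => //).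
  apply: lnle; first by apply: (lt_INR 0); apply/ltP.
  rewrite -mult_INR; apply: le_INR; apply/leP; by rewrite -E.
have HN : INR n = (INR a + INR k)%R by rewrite En plus_INR.
have HK : (0 <= INR k)%R by apply: pos_INR.
have HKL : (INR k * ln 2 <= INR k)%R.
  have := Rmult_le_compat_l (INR k) (ln 2) 1 HK ltac:(lra). lra.
have Hmain : (ln (INR A') <= ln (INR A) + INR n * ln (INR n) - INR a * ln (INR a)
   - INR k * ln 2 + 3 * ln (INR n))%R.
  move: Hb; rewrite /fl => Hb. lra.
rewrite /log2.
set u := ln (INR A') in Hmain *. set v := ln (INR A) in Hmain *.
set w := ln (INR n) in Hmain *. set z := ln (INR a) in Hmain *.
have E : ((v / ln 2 + INR n * (w / ln 2) - INR a * (z / ln 2) - INR k + 3 * (w / ln 2))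
   - u / ln 2 = (v + INR n * w - INR a * z - INR k * ln 2 + 3 * w - u) / ln 2)%R.
  field; lra.
have : (0 <= (v + INR n * w - INR a * z - INR k * ln 2 + 3 * w - u) / ln 2)%R.
  apply: Rmult_le_pos; [lra| left; apply: Rinv_0_lt_compat; lra].
lra.
Qed.
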